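(* Let $G$ be a finite graph with $n$ vertices and let $I$ be a vertex of maximum degree in $\mathcal{I}^0_{\mathrm{AR}}(G)$ (this maximum degree equals $n$, so that the neighbours of $I$ are exactly the sets $I_x=I\triangle\{x\}$, $x\in V(G)$). Let $u,v$ be distinct vertices of $G$. Then $uv\notin E(G)$ if and only if $I_u$ and $I_v$ have a common neighbour $I'\neq I$ in $\mathcal{I}^0_{\mathrm{AR}}(G)$.
   Context: $\mathcal{I}^0_{\mathrm{AR}}(G)$ is the graph whose vertices are all independent sets of $G$ (including the empty set), two independent sets being adjacent iff their symmetric difference has exactly one element. $\triangle$ denotes symmetric difference. *)

(* Defs.v *)
From mathcomp Require Import all_boot.
Set Implicit Arguments. Unset Strict Implicit. Unset Printing Implicit Defensive.

(* A finite simple graph: vertex type V : finType, edge relation e : rel V,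
   assumed symmetric and irreflexive in the theorem statement. *)

Definition symdiff (V : finType) (A B : {set V}) : {set V} :=
  (A :\: B) :|: (B :\: A).

Definition indep (V : finType) (e : rel V) (A : {set V}) : bool :=
  [forall x in A, forall y in A, ~~ e x y].

Definition ar_adj (V : finType) (e : rel V) (A B : {set V}) : bool :=
  [&& indep e A, indep e B & #|symdiff A B| == 1].

Definition ar_deg (V : finType) (e : rel V) (A : {set V}) : nat :=
  #|[set B : {set V} | ar_adj e A B]|.

(* Main.v *)
Require Import Defs.
From mathcomp Require Import all_boot.
Set Implicit Arguments. Unset Strict Implicit.

Lemma in_symdiff (V : finType) (A B : {set V}) x :
  (x \in symdiff A B) = (x \in A) (+) (x \in B).
Proof. by rewrite !inE; case: (x \in A); case: (x \in B). Qed.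

Lemma indepP (V : finType) (e : rel V) (A : {set V}) :
  reflect (forall x y, x \in A -> y \in A -> ~~ e x y) (indep e A).
Proof.
apply: (iffP forallP) => [H x y xA yA | H x].
  by move/implyP: (H x) => /(_ xA) /forallP /(_ y) /implyP /(_ yA).
apply/implyP => xA; apply/forallP => y; apply/implyP => yA; exact: H.
Qed.

Lemma adjE (V : finType) (e : rel V) (A B : {set V}) :
  ar_adj e A B -> exists a, B = symdiff A [set a].
Proof.
case/and3P => _ _ /cards1P [a Ha]; exists a; rewrite -Ha.
by apply/setP => x; rewrite !in_symdiff addbA addbb.
Qed.

Lemma all_indep (V : finType) (e : rel V) (e_irr : irreflexive e)
  (I : {set V}) (HI : indep e I)
  (Hmax : forall J : {set V}, indep e J -> ar_deg e J <= ar_deg e I) x :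
  indep e (symdiff I [set x]).
Proof.
pose f := fun y : V => symdiff I [set y].
have finj : injective f.
  move=> a b /setP /(_ a); rewrite !in_symdiff !inE eqxx.
  by case: (a \in I) => /=; case: eqP => // ->.
set S := [set B | ar_adj e I B].
have sub : S \subset f @: setT.
  apply/subsetP => B; rewrite inE => /adjE [a ->].
  by apply/imsetP; exists a.
have c1 : #|V| <= ar_deg e set0.
  rewrite /ar_deg -cardsT -(card_imset setT (@set1_inj V)).
  apply: subset_leq_card; apply/subsetP => B /imsetP [a _ ->].
  rewrite inE /ar_adj; apply/and3P; split.
  - by apply/indepP => y z; rewrite inE.
  - by apply/indepP => y z; rewrite !inE => /eqP -> /eqP ->; rewrite e_irr.
  - have -> : symdiff set0 [set a] = [set a].
      by apply/setP => y; rewrite in_symdiff !inE.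
    by rewrite cards1.
have i0 : indep e set0 by apply/indepP => y z; rewrite inE.
have c2 := Hmax _ i0.
have c3 : #|f @: setT| = #|V| by rewrite card_imset // cardsT.
have eqS : S = f @: setT.
  apply/eqP; rewrite eqEcard sub c3.
  exact: leq_trans c1 c2.
have : f x \in S by rewrite eqS; apply/imsetP; exists x.
by rewrite inE => /and3P [].
Qed.

Theorem lemma4p2 (V : finType) (e : rel V)
  (e_sym : symmetric e) (e_irr : irreflexive e)
  (I : {set V}) (HI : indep e I)
  (Hmax : forall J : {set V}, indep e J -> ar_deg e J <= ar_deg e I)
  (u v : V) (Huv : u != v) :
  ~~ e u v <->
  exists I' : {set V}, [/\ I' != I,
      ar_adj e (symdiff I [set u]) I' &
      ar_adj e (symdiff I [set v]) I'].
Proof.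
have Iu := all_indep e_irr HI Hmax u.
have Iv := all_indep e_irr HI Hmax v.
have Hvu : v != u by rewrite eq_sym.
split=> [nuv | [B [BI aBu aBv]]].
  pose J := symdiff I [set u; v].
  have HJ : indep e J.
    apply/indepP => x y.
    have [xv|xnv] := eqVneq x v; have [yv|ynv] := eqVneq y v;
    have [xu|xnu] := eqVneq x u; have [yu|ynu] := eqVneq y u.
    all: try (by move: Huv; rewrite -?xu -?xv -?yu -?yv eqxx).
    all: try by (subst; rewrite ?e_irr ?(negbTE Huv) ?(negbTE Hvu) //).
    all: try (by subst; rewrite // e_sym).
    all: try (by move=> Hx Hy; apply: (elimT (indepP _ _) Iu); 
      [move: Hx| move: Hy]; rewrite !in_symdiff !inE ?(negbTE xnv) ?(negbTE ynv) ?orbF //).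
    all: try (by move=> Hx Hy; apply: (elimT (indepP _ _) Iv); 
      [move: Hx| move: Hy]; rewrite !in_symdiff !inE ?(negbTE xnu) ?(negbTE ynu) //).
  exists J; split.
  - apply/negP => /eqP /setP /(_ u); rewrite in_symdiff !inE eqxx /=.
    by case: (u \in I).
  - apply/and3P; split => //.
    have -> : symdiff (symdiff I [set u]) J = [set v].
      apply/setP => y; rewrite !in_symdiff !inE.
      have [->|ynu] := eqVneq y u; first by rewrite ?eqxx ?(negbTE Huv) ?(negbTE Hvu) /=; case: (u \in I).
      by case: (y \in I); case: (y == v).
    by rewrite cards1.
  - apply/and3P; split => //.
    have -> : symdiff (symdiff I [set v]) J = [set u].
      apply/setP => y; rewrite !in_symdiff !inE.
      have [->|ynv] := eqVneq y v; first by rewrite ?eqxx ?(negbTE Huv) ?(negbTE Hvu) /=; case: (v \in I).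
      by case: (y \in I); case: (y == u).
    by rewrite cards1.
apply/negP => euv.
have uI : u \notin I.
  apply/negP => uI; case vI: (v \in I).
    by have := elimT (indepP _ _) HI u v uI vI; rewrite euv.
  suff: ~~ e u v by rewrite euv.
  apply: (elimT (indepP _ _) Iv).
    by rewrite !in_symdiff !inE (negbTE Huv) uI.
  by rewrite !in_symdiff !inE eqxx vI.
have vI : v \notin I.
  apply/negP => vI; case uI': (u \in I); first by rewrite uI' in uI.
  suff: ~~ e u v by rewrite euv.
  apply: (elimT (indepP _ _) Iu).
    by rewrite !in_symdiff !inE eqxx uI'.
  by rewrite !in_symdiff !inE (negbTE Hvu) vI.
have [a Ha] := adjE aBu; have [b Hb] := adjE aBv.
have Bi : B \in (set0 : {set {set V}}) -> False by rewrite inE.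
have au : a != u.
  apply/eqP => au; move/eqP: BI; apply; rewrite Ha au.
  by apply/setP => y; rewrite !in_symdiff addbK.
have uB : u \in B by rewrite Ha !in_symdiff !inE eqxx (negbTE uI) eq_sym (negbTE au).
have bu : b == u.
  by move: uB; rewrite Hb !in_symdiff !inE (negbTE Huv) (negbTE uI) /= eq_sym.
have vB : v \in B by rewrite Hb !in_symdiff !inE eqxx (negbTE vI) (eqP bu) (negbTE Hvu).
case/and3P: aBu => _ HB _.
by have := elimT (indepP _ _) HB u v uB vB; rewrite euv.
Qed.
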